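(* In the semi-classical setting, for every $n\ge1$ the polynomial $y=p_n$ satisfies $$W\Theta_n\, y'' = \big(W\Theta_n' - W'\Theta_n - 2V\Theta_n\big)\,y' + K_n\, y,$$ where $$K_n = (\Omega_n - V)'\Theta_n - (\Omega_n-V)\Theta_n' + \frac{\Theta_n\big(\Omega_n^2 - V^2 - a_n^2\Theta_n\Theta_{n-1}\big)}{W},$$ and $K_n$ is a polynomial.
   Context: Let $(\mu_k)_{k\ge 0}$ be complex numbers such that all Hankel determinants $\det(\mu_{i+j})_{0\le i,j\le n}$ are nonzero; $\mathcal L(x^k)=\mu_k$; $p_n(z)=\gamma_n z^n+\cdots$ ($\gamma_n\ne0$) orthonormal: $\mathcal L(p_np_m)=\delta_{n,m}$; recurrence $a_{n+1}p_{n+1}(z)=(z-b_n)p_n(z)-a_np_{n-1}(z)$, $p_{-1}=0$, $a_n=\gamma_{n-1}/\gamma_n$. $f(z)=\sum_{k\ge0}\mu_k z^{-k-1}$ (formal series); $p^{(1)}_{n-1}$ is the polynomial part of $fp_n$ and $\varepsilon_n=fp_n-p^{(1)}_{n-1}$. Semi-classical: polynomials $W\not\equiv0,V,U$ with $Wf'=2Vf+U$. For $n\ge0$, $\Theta_n = W(\varepsilon_n p_n' - \varepsilon_n' p_n) + 2V\varepsilon_n p_n$, and for $n\ge1$, $\Omega_n = a_n W(\varepsilon_{n-1}p_n' - \varepsilon_n' p_{n-1}) + a_n V(\varepsilon_{n-1}p_n + \varepsilon_n p_{n-1})$; these are polynomials in $z$. Primes denote $d/dz$. *)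

(* Defs.v *)
From HB Require Import structures.
From mathcomp Require Import all_boot all_order all_algebra.
From mathcomp Require Import complex.
From mathcomp Require Import reals.
Set Implicit Arguments. Unset Strict Implicit. Unset Printing Implicit Defensive.
Import Order.TTheory GRing.Theory Num.Theory.
Local Open Scope ring_scope.

(* Formal Laurent series in z with finitely many positive powers.
   A pair (d, c) represents  z^d * sum_{k>=0} c k * z^(-k),
   i.e. the coefficient of z^m is c (d - m) for m <= d, and 0 for m > d. *)
Section Laurent.
Variable C : comNzRingType.

Definition LS := (nat * (nat -> C))%type.

Definition ls_coef (x : LS) (m : int) : C :=
  if (m <= (x.1)%:Z)%R then x.2 (absz ((x.1)%:Z - m)) else 0.

Definition ls_eq (x y : LS) : Prop := forall m : int, ls_coef x m = ls_coef y m.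

Definition ls_of_poly (q : {poly C}) : LS :=
  (size q, fun k => if (k <= size q)%N then q`_(size q - k) else 0).

Definition ls_add (x y : LS) : LS :=
  let D := maxn x.1 y.1 in
  (D, fun k => ls_coef x (D%:Z - k%:Z) + ls_coef y (D%:Z - k%:Z)).

Definition ls_opp (x : LS) : LS := (x.1, fun k => - x.2 k).

Definition ls_sub (x y : LS) : LS := ls_add x (ls_opp y).

Definition ls_mul (x y : LS) : LS :=
  ((x.1 + y.1)%N, fun k => \sum_(i < k.+1) x.2 i * y.2 (k - i)%N).

(* formal derivative d/dz: c_j z^(d-j) |-> (d-j) c_j z^(d-j-1) *)
Definition ls_deriv (x : LS) : LS :=
  (x.1, fun k => if k is k'.+1 then x.2 k' * ((x.1)%:Z - k'%:Z)%:~R else 0).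

Definition polypart (x : LS) : {poly C} := \poly_(i < (x.1).+1) ls_coef x i%:Z.

End Laurent.

Section OP.
Variable C : fieldType.
Implicit Types (mu : nat -> C) (p : nat -> {poly C}).

Definition Lfun mu (q : {poly C}) : C := \sum_(i < size q) q`_i * mu i.

Definition hankel mu (n : nat) : 'M[C]_(n.+1) := \matrix_(i, j) mu (i + j)%N.

Definition OP_orthonormal mu p : Prop :=
  (forall n, size (p n) = n.+1) /\
  (forall n m, Lfun mu (p n * p m) = (n == m)%:R).

Definition gam p (n : nat) : C := lead_coef (p n).

(* a_n = gamma_{n-1} / gamma_n  (used for n >= 1) *)
Definition acoef p (n : nat) : C := gam p n.-1 / gam p n.

(* f(z) = sum_{k>=0} mu_k z^{-k-1} *)
Definition fseries mu : LS C := (0%N, fun k => if k is k'.+1 then mu k' else 0).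

(* eps_n = f p_n - p^{(1)}_{n-1}, with p^{(1)}_{n-1} the polynomial part of f p_n *)
Definition eps mu p (n : nat) : LS C :=
  let g := ls_mul (fseries mu) (ls_of_poly (p n)) in
  ls_sub g (ls_of_poly (polypart g)).

Definition semiclassical mu (W V U : {poly C}) : Prop :=
  W != 0 /\
  ls_eq (ls_mul (ls_of_poly W) (ls_deriv (fseries mu)))
        (ls_add (ls_mul (ls_of_poly (2%:R * V)) (fseries mu)) (ls_of_poly U)).

Definition Theta_ls mu p (W V : {poly C}) (n : nat) : LS C :=
  let e := eps mu p n in
  let P := ls_of_poly (p n) in
  let P' := ls_of_poly (p n)^`() in
  ls_add (ls_mul (ls_of_poly W) (ls_sub (ls_mul e P') (ls_mul (ls_deriv e) P)))
         (ls_mul (ls_of_poly (2%:R * V)) (ls_mul e P)).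

Definition Omega_ls mu p (W V : {poly C}) (n : nat) : LS C :=
  let e := eps mu p n in
  let e1 := eps mu p n.-1 in
  let an := acoef p n in
  ls_add
    (ls_mul (ls_of_poly (an *: W))
       (ls_sub (ls_mul e1 (ls_of_poly (p n)^`()))
               (ls_mul (ls_deriv e) (ls_of_poly (p n.-1)))))
    (ls_mul (ls_of_poly (an *: V))
       (ls_add (ls_mul e1 (ls_of_poly (p n)))
               (ls_mul e (ls_of_poly (p n.-1))))).

(* Theta_n and Omega_n are polynomials; we take them as elements of {poly C} *)
Definition Theta mu p W V n : {poly C} := polypart (Theta_ls mu p W V n).
Definition Omega mu p W V n : {poly C} := polypart (Omega_ls mu p W V n).

End OP.

(* Main.v *)
Require Import Defs.
From HB Require Import structures.
From mathcomp Require Import all_boot all_order all_algebra.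
From mathcomp Require Import complex.
From mathcomp Require Import reals.
From mathcomp Require Import zify ring.
Set Implicit Arguments. Unset Strict Implicit. Unset Printing Implicit Defensive.
Import Order.TTheory GRing.Theory Num.Theory.
Local Open Scope ring_scope.

Section Alg.
Variable C : fieldType.

Lemma combo (W Th A A2 A1 Th' W' Om Om' V V' G a B B' Th1: {poly C}) :
  W * (W * Th * A2) -
  W *
  ((W * Th' - W' * Th - 2%:R * V * Th) * A1 +
   ((Om' - V') * Th - (Om - V) * Th' + Th * G) * A) =
  W * Th *
  (W' * A1 + W * A2 -
   ((Om' - V') * A + (Om - V) * A1 -
    a * (Th' * B + Th * B'))) -
  W * Th' * (W * A1 - ((Om - V) * A - a * Th * B)) -
  a * Th ^+ 2 * (W * B' - (a * Th1 * A - (Om + V) * B)) +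
  Th * (Om + V) * (W * A1 - ((Om - V) * A - a * Th * B)) +
  Th * A * (Om ^+ 2 - V ^+ 2 - a ^+ 2 * (Th * Th1) - W * G).
Proof. ring. Qed.

Lemma final_alg (W V U A B q r : {poly C}) (a : C) :
  W != 0 ->
  a%:P * (q*B - r*A) = 1 ->
  let Th := W*(q^`()*A - q*A^`()) - U*A^+2 - 2%:R*V*q*A in
  let Th1 := W*(r^`()*B - r*B^`()) - U*B^+2 - 2%:R*V*r*B in
  let Om := a%:P * (W*(q^`()*B - r*A^`()) - U*(A*B) - V*(r*A + q*B)) in
  exists K : {poly C},
    W * K = W * ((Om - V)^`() * Th - (Om - V) * Th^`())
            + Th * (Om ^+ 2 - V ^+ 2 - (a ^+ 2) *: (Th * Th1)) /\
    W * Th * A^`(2) = (W * Th^`() - W^`() * Th - 2%:R * V * Th) * A^`() + K * A.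
Proof.
move=> W0 hD Th Th1 Om.
have hD' : a%:P * (q^`()*B + q*B^`() - r^`()*A - r*A^`()) = 0.
  have := congr1 deriv hD; rewrite deriv_mulC !derivB !derivM -polyC1 derivC.
  by move=> <-; congr (_ * _); ring.
set D := q*B - r*A in hD.
set X1 := q^`()*A - q*A^`(); set Y1 := - U*A^+2 - 2%:R*V*q*A.
set X2 := r^`()*B - r*B^`(); set Y2 := - U*B^+2 - 2%:R*V*r*B.
set X3 := a%:P * (q^`()*B - r*A^`()); set Y3 := - (a%:P * (U*A*B + V*(r*A + q*B))).
have eTh : Th = W * X1 + Y1 by rewrite /Th /X1 /Y1; ring.
have eTh1 : Th1 = W * X2 + Y2 by rewrite /Th1 /X2 /Y2; ring.
have eOm : Om = W * X3 + Y3 by rewrite /Om /X3 /Y3; ring.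
pose G := X3 * (W * X3 + 2%:R * Y3) - a%:P ^+ 2 * (X1 * (W * X2 + Y2) + Y1 * X2).
have hG : Om ^+ 2 - V ^+ 2 - (a ^+ 2) *: (Th * Th1) = W * G.
  have -> : Om ^+ 2 - V ^+ 2 - (a ^+ 2) *: (Th * Th1) =
     W * G + V^+2 * ((a%:P * D)^+2 - 1).
    rewrite -mul_polyC eTh eTh1 eOm /G /D /Y1 /Y2 /Y3 polyC_exp; ring.
  by rewrite hD expr1n subrr mulr0 addr0.
pose K := (Om - V)^`() * Th - (Om - V) * Th^`() + Th * G.
have d1 : W * A^`() = (Om - V) * A - a%:P * Th * B.
  have -> : (Om - V) * A - a%:P * Th * B = W * A^`() + (a%:P * D - 1) * (W * A^`() + V * A).
    by rewrite /Om /Th /D; ring.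
  by rewrite hD subrr mul0r addr0.
have d2 : W * B^`() = a%:P * Th1 * A - (Om + V) * B.
  have -> : a%:P * Th1 * A - (Om + V) * B = W * B^`() + (a%:P * D - 1) * (W * B^`() + V * B)
     - W * B * (a%:P * (q^`()*B + q*B^`() - r^`()*A - r*A^`())).
    by rewrite /Om /Th1 /D; ring.
  by rewrite hD hD' subrr mul0r addr0 mulr0 subr0.
clearbody Th Th1 Om.
have d1' : W^`() * A^`() + W * A^`()^`() =
   (Om^`() - V^`()) * A + (Om - V) * A^`() - a%:P * (Th^`() * B + Th * B^`()).
  have := congr1 deriv d1; rewrite !derivB !derivM !derivB derivC.
  by move=> ->; ring.
exists K; split; first by rewrite /K hG; ring.
apply: (mulfI W0).
rewrite derivnS derivn1.
have hG' : Om ^+ 2 - V ^+ 2 - a%:P ^+ 2 * (Th * Th1) = W * G by rewrite -polyC_exp mul_polyC.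
rewrite /K; clearbody G.
move: d1 d1' d2 hG' => /eqP; rewrite -subr_eq0 => /eqP z1 /eqP; rewrite -subr_eq0 => /eqP z1'.
move=> /eqP; rewrite -subr_eq0 => /eqP z2 /eqP; rewrite -subr_eq0 => /eqP z3.
apply/eqP; rewrite -subr_eq0; apply/eqP.
set L1 := W * A^`() - _ in z1.
set L1' := _ - (_ - a%:P * _) in z1'.
set L2 := W * B^`() - _ in z2.
set L3 := _ - W * G in z3.
have -> : W * (W * Th * A^`()^`()) -
  W * ((W * Th^`() - W^`() * Th - 2%:R * V * Th) * A^`() +
   ((Om - V)^`() * Th - (Om - V) * Th^`() + Th * G) * A) =
  W * Th * L1' - W * Th^`() * L1 - a%:P * Th^+2 * L2 + Th * (Om + V) * L1 + Th * A * L3.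
  rewrite /L1 /L1' /L2 /L3 ?derivB; exact: combo.
by rewrite z1 z1' z2 z3 !mulr0 !(subr0, addr0).
Qed.
End Alg.

Section LSF.
Variable C : fieldType.
Implicit Types x y : LS C.
Implicit Types p q : {poly C}.

Lemma kap_gt x m : (x.1%:Z < m)%R -> ls_coef x m = 0.
Proof. by rewrite /ls_coef => h; case: ifPn => //; lia. Qed.

Lemma kap_add x y m : ls_coef (ls_add x y) m = ls_coef x m + ls_coef y m.
Proof.
rewrite {1}/ls_coef /ls_add /=; case: ifPn => hm.
  move: hm; set D := maxn _ _ => hm.
  by have -> : (D%:Z - (absz (D%:Z - m))%:Z)%R = m by lia.
move: hm; have := leq_maxl x.1 y.1; have := leq_maxr x.1 y.1.
set D := maxn _ _ => h1 h2 hm.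
by rewrite !kap_gt ?addr0 //; lia.
Qed.

Lemma kap_opp x m : ls_coef (ls_opp x) m = - ls_coef x m.
Proof. by rewrite /ls_coef /ls_opp /=; case: ifPn; rewrite ?oppr0. Qed.

Lemma kap_sub x y m : ls_coef (ls_sub x y) m = ls_coef x m - ls_coef y m.
Proof. by rewrite /ls_sub kap_add kap_opp. Qed.

Lemma kap_poly (p : {poly C}) m :
  ls_coef (ls_of_poly p) m = if (0 <= m)%R then p`_(absz m) else 0.
Proof.
rewrite /ls_coef /ls_of_poly /=; case: ifPn => h1; case: ifPn => h2.
- case: ifPn => h3; last by lia.
  by congr (p`_ _); lia.
- by case: ifPn => // h3; rewrite nth_default //; lia.
- rewrite nth_default //. move: h1 h2; set s := size p => h1 h2. lia.
- by [].
Qed.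

Lemma kap_deriv x m :
  ls_coef (ls_deriv x) m = ls_coef x (m + 1) * (m + 1)%:~R.
Proof.
case: x => d c; rewrite /ls_coef /ls_deriv /=; case: ifPn => h1.
  case E: (absz (d%:Z - m)) => [|k].
    have h : ~~ (m + 1 <= d%:Z) by lia.
    by rewrite (negbTE h) mul0r.
  have -> : (m + 1 <= d%:Z) by lia.
  by congr (_ * _); [congr (c _) | congr (_%:~R)]; lia.

have h : ~~ (m + 1 <= d%:Z) by lia.
by rewrite (negbTE h) mul0r.
Qed.

Definition al D x k := ls_coef x (D%:Z - k%:Z).
Definition PP D N x : {poly C} := \poly_(k < N) al D x k.
Definition cong N (p q : {poly C}) := forall k, (k < N)%N -> p`_k = q`_k.

Lemma al_shift x D k : (x.1 <= D)%N ->
  al D x k = if (D - x.1 <= k)%N then x.2 (k - (D - x.1))%N else 0.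
Proof.
case: x => d c /= h; rewrite /al /ls_coef /=.
case: ifPn => h1; case: ifPn => h2 //.
- by congr (c _); lia.
- lia.
- lia.
Qed.

Lemma al_mul x y D1 D2 k : (x.1 <= D1)%N -> (y.1 <= D2)%N ->
  al (D1 + D2) (ls_mul x y) k = \sum_(i < k.+1) al D1 x i * al D2 y (k - i).
Proof.
move=> hx hy.
rewrite al_shift /=; last by rewrite leq_add.
have -> : (D1 + D2 - (x.1 + y.1) = (D1 - x.1) + (D2 - y.1))%N by lia.
pose s1 := (D1 - x.1)%N; pose s2 := (D2 - y.1)%N.
pose T1 := \poly_(i < k.+1) x.2 i; pose T2 := \poly_(i < k.+1) y.2 i.
have e1 : forall i, (i <= k)%N -> al D1 x i = ('X^s1 * T1)`_i.
  move=> i hi; rewrite al_shift // coefXnM -/s1 leqNgt.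
  by case: ltnP => h //=; rewrite coef_poly ifT //; lia.
have e2 : forall i, (i <= k)%N -> al D2 y i = ('X^s2 * T2)`_i.
  move=> i hi; rewrite al_shift // coefXnM -/s2 leqNgt.
  by case: ltnP => h //=; rewrite coef_poly ifT //; lia.
rewrite (eq_bigr (fun i : 'I_k.+1 => ('X^s1*T1)`_i * ('X^s2*T2)`_(k - i))); last first.
  by move=> i _; rewrite e1 ?e2 ?leq_subr // -ltnS.
rewrite -coefM.
have -> : 'X^s1 * T1 * ('X^s2 * T2) = 'X^(s1+s2) * (T1*T2) by rewrite exprD; ring.
rewrite coefXnM leqNgt; case: ltnP => h //=.
rewrite coefM; apply: eq_bigr => i _; rewrite !coef_poly !ifT //.
  by move: (ltn_ord i) h; move: (nat_of_ord i) => j; move: (x.1) (y.1) => a b; lia.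
by move: (ltn_ord i) h; move: (nat_of_ord i) => j; move: (x.1) (y.1) => a b; lia.
Qed.


Lemma cong_refl N p : cong N p p. Proof. by []. Qed.
Lemma cong_sym N p q : cong N p q -> cong N q p.
Proof. by move=> h k hk; rewrite h. Qed.
Lemma cong_trans N p q r : cong N p q -> cong N q r -> cong N p r.
Proof. by move=> h1 h2 k hk; rewrite h1 ?h2. Qed.
Lemma cong_eq N p q : p = q -> cong N p q.
Proof. by move=> ->. Qed.
Lemma cong_add N p q p' q' : cong N p p' -> cong N q q' -> cong N (p + q) (p' + q').
Proof. by move=> h1 h2 k hk; rewrite !coefD h1 ?h2. Qed.
Lemma cong_opp N p p' : cong N p p' -> cong N (- p) (- p').
Proof. by move=> h1 k hk; rewrite !coefN h1. Qed.
Lemma cong_sub N p q p' q' : cong N p p' -> cong N q q' -> cong N (p - q) (p' - q').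
Proof. by move=> h1 h2; apply: cong_add => //; apply: cong_opp. Qed.
Lemma cong_mul N p q p' q' : cong N p p' -> cong N q q' -> cong N (p * q) (p' * q').
Proof.
move=> h1 h2 k hk; rewrite !coefM; apply: eq_bigr => i _.
rewrite h1 ?h2 //; first by apply: leq_ltn_trans hk; rewrite leq_subr.
by apply: leq_ltn_trans hk; rewrite -ltnS.
Qed.

Lemma PP_add D N x y : PP D N (ls_add x y) = PP D N x + PP D N y.
Proof.
apply/polyP => k; rewrite coefD !coef_poly; case: ifP => // _.
  by rewrite /al kap_add.
by rewrite addr0.
Qed.

Lemma PP_opp D N x : PP D N (ls_opp x) = - PP D N x.
Proof.
apply/polyP => k; rewrite coefN !coef_poly; case: ifP => // _.
  by rewrite /al kap_opp.
by rewrite oppr0.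
Qed.

Lemma PP_sub D N x y : PP D N (ls_sub x y) = PP D N x - PP D N y.
Proof. by rewrite /ls_sub PP_add PP_opp. Qed.

Lemma PP_mul D1 D2 N x y : (x.1 <= D1)%N -> (y.1 <= D2)%N ->
  cong N (PP (D1 + D2) N (ls_mul x y)) (PP D1 N x * PP D2 N y).
Proof.
move=> hx hy k hk; rewrite coef_poly hk al_mul // coefM.
apply: eq_bigr => i _; rewrite !coef_poly !ifT //.
  by apply: leq_ltn_trans hk; rewrite leq_subr.
by apply: leq_ltn_trans hk; rewrite -ltnS.
Qed.

Lemma ls_eq_PP D N x y : ls_eq x y -> PP D N x = PP D N y.
Proof. by move=> h; apply/polyP => k; rewrite !coef_poly /al h. Qed.

Lemma PP_ls_eq D x y : (x.1 <= D)%N -> (y.1 <= D)%N ->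
  (forall N, cong N (PP D N x) (PP D N y)) -> ls_eq x y.
Proof.
move=> hx hy h m.
case: (boolP (m <= D%:Z)) => hm.
  have := h (absz (D%:Z - m)).+1 (absz (D%:Z - m)) (ltnSn _).
  rewrite !coef_poly ltnSn /al.
  by have -> : (D%:Z - (absz (D%:Z - m))%:Z)%R = m by lia.
rewrite !kap_gt //.
  by move: hm; move: (y.1) hy => a ha; lia.
by move: hm; move: (x.1) hx => a ha; lia.
Qed.

Lemma polypart_eq x (P : {poly C}) : ls_eq x (ls_of_poly P) -> polypart x = P.
Proof.
move=> h; apply/polyP => i; rewrite coef_poly.
have := h i%:Z; rewrite kap_poly /= => <-.
case: ifP => // hi.
by rewrite kap_gt //; move: hi; move: (x.1) => a; lia.
Qed.

Definition Dl D (p : {poly C}) := 'X * (p *+ D) - 'X^2 * p^`().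

Lemma coef_Dl D p k :
  (Dl D p)`_k = if k is k'.+1 then p`_k' *+ D - p`_k' *+ k' else 0.
Proof.
rewrite /Dl coefB coefXM coefXnM coefMn; case: k => [|k] /=; first by rewrite subr0.
case: k => [|k] /=; first by rewrite mulr0n subr0.
by rewrite coef_deriv /=; rewrite !subSS subn0.
Qed.

Lemma cong_Dl N D p q : cong N p q -> cong N (Dl D p) (Dl D q).
Proof.
move=> h [|k] hk; rewrite !coef_Dl // h //.
by apply: ltn_trans hk.
Qed.

Lemma Dl_mul D1 D2 p q : Dl (D1 + D2) (p * q) = Dl D1 p * q + p * Dl D2 q.
Proof. rewrite /Dl derivM -(mulr_natr (p*q)) -(mulr_natr p D1) -(mulr_natr q D2) natrD; move: (D1%:R : {poly C}) (D2%:R : {poly C}) => a b; ring. Qed.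

Lemma Dl_add D p q : Dl D (p + q) = Dl D p + Dl D q.
Proof. rewrite /Dl derivD -(mulr_natr (p+q)) -(mulr_natr p) -(mulr_natr q); move: (D%:R : {poly C}) => a; ring. Qed.

Lemma Dl_sub D p q : Dl D (p - q) = Dl D p - Dl D q.
Proof. rewrite /Dl derivB -(mulr_natr (p-q)) -(mulr_natr p) -(mulr_natr q); move: (D%:R : {poly C}) => a; ring. Qed.

Lemma PP_deriv D N x : (x.1 <= D)%N ->
  cong N (PP D N (ls_deriv x)) (Dl D (PP D N x)).
Proof.
move=> hx k hk; rewrite coef_Dl coef_poly hk /al kap_deriv.
case: k hk => [|k] hk.
  by rewrite kap_gt ?mul0r //; move: hx; move: (x.1) => a; lia.
rewrite coef_poly ifT; last by apply: ltn_trans hk.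
have -> : (D%:Z - k.+1%:Z + 1)%R = (D%:Z - k%:Z)%R by lia.
by rewrite mulrzr mulrzBr.
Qed.

Definition rv D (p : {poly C}) : {poly C} := \poly_(k < D.+1) p`_(D - k).

Lemma PP_poly D N p : cong N (PP D N (ls_of_poly p)) (rv D p).
Proof.
move=> k hk; rewrite !coef_poly hk /al kap_poly.
case: ifPn => h1; case: ifPn => h2.
- by congr (p`_ _); lia.
- lia.
- lia.
- by [].
Qed.

Lemma rv_add D p q : rv D (p + q) = rv D p + rv D q.
Proof. by apply/polyP => k; rewrite coefD !coef_poly; case: ifP; rewrite ?coefD ?addr0. Qed.
Lemma rv_opp D p : rv D (- p) = - rv D p.
Proof. by apply/polyP => k; rewrite coefN !coef_poly; case: ifP; rewrite ?coefN ?oppr0. Qed.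
Lemma rv_sub D p q : rv D (p - q) = rv D p - rv D q.
Proof. by rewrite rv_add rv_opp. Qed.
Lemma rv_scale D c p : rv D (c *: p) = c *: rv D p.
Proof. by apply/polyP => k; rewrite coefZ !coef_poly; case: ifP; rewrite ?coefZ ?mulr0. Qed.
Lemma rv_muln D p n : rv D (p *+ n) = rv D p *+ n.
Proof. by apply/polyP => k; rewrite coefMn !coef_poly; case: ifP; rewrite ?coefMn ?mul0rn. Qed.

Lemma rv_deriv D p : (size p <= D.+1)%N -> rv D (p^`()) = Dl D (rv D p).
Proof.
move=> hs; apply/polyP => k; rewrite coef_Dl [LHS]coef_poly.
case: k => [|k].
  by rewrite ltn0Sn subn0 coef_deriv nth_default ?mul0rn.
rewrite [(rv D p)`_k]coef_poly.
case: (ltnP k D) => h.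
  have h1 : (k.+1 < D.+1)%N by [].
  have h2 : (k < D.+1)%N by apply: ltnW.
  rewrite h1 h2 coef_deriv.
  have -> : (D - k.+1).+1 = (D - k)%N by lia.
  by rewrite -mulrnBr ?(ltnW h) // (subnKC (ltnW h)).
have h1 : (k.+1 < D.+1)%N = false by apply/negbTE; rewrite -leqNgt.
rewrite h1.
case: ifP => h2; last by rewrite !mul0rn subrr.
have -> : k = D by lia.
by rewrite subrr.
Qed.

Lemma rv0 D : rv D 0 = 0.
Proof. by apply/polyP => k; rewrite /rv coef_poly !coef0; case: ifP. Qed.

Lemma rv_sum D n (F : 'I_n -> {poly C}) :
  rv D (\sum_(i < n) F i) = \sum_(i < n) rv D (F i).
Proof. by elim/big_rec2: _ => [|i y1 y2 _ <-]; rewrite ?rv0 ?rv_add. Qed.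

Lemma rv_X D c m : (m <= D)%N -> rv D (c *: 'X^m) = c *: 'X^(D - m).
Proof.
move=> hm; apply/polyP => k; rewrite coef_poly !coefZ !coefXn.
case: ifP => hk.
  by congr (_ * _%:R); apply/eqP/eqP; lia.
move/negbT: hk => hk.
have -> : (k == D - m)%N = false by apply/negbTE/eqP; lia.
by rewrite mulr0.
Qed.

Lemma poly_expand p n : (size p <= n)%N -> p = \sum_(i < n) p`_i *: 'X^i.
Proof.
move=> hs; rewrite -poly_def; apply/polyP => k; rewrite coef_poly.
by case: ltnP => // hk; rewrite nth_default //; apply: leq_trans hk.
Qed.

Lemma rv_expand D p : (size p <= D.+1)%N -> rv D p = \sum_(i < D.+1) p`_i *: 'X^(D - i).
Proof.
move=> hs; rewrite {1}(poly_expand hs) rv_sum; apply: eq_bigr => i _.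
by rewrite rv_X // -ltnS.
Qed.

Lemma rv_mul D1 D2 p q : (size p <= D1.+1)%N -> (size q <= D2.+1)%N ->
  rv (D1 + D2) (p * q) = rv D1 p * rv D2 q.
Proof.
move=> hp hq.
rewrite (rv_expand hp) (rv_expand hq) {1}(poly_expand hp) {1}(poly_expand hq).
rewrite big_distrl rv_sum [RHS]big_distrl /=; apply: eq_bigr => i _.
rewrite big_distrr rv_sum [RHS]big_distrr /=; apply: eq_bigr => j _.
rewrite -scalerAl -scalerAr scalerA -exprD rv_X; last first.
  by have := ltn_ord i; have := ltn_ord j; lia.
rewrite -scalerAl -scalerAr scalerA -exprD; congr (_ *: 'X^_).
by have := ltn_ord i; have := ltn_ord j; lia.
Qed.

Lemma size_deriv_le p : (size p^`() <= size p)%N.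
Proof.
by apply/leq_sizeP => i hi; rewrite coef_deriv nth_default ?mul0rn //; apply: leq_trans hi _.
Qed.

Variable mu : nat -> C.

Lemma Lfun_big q M : (size q <= M)%N -> Lfun mu q = \sum_(i < M) q`_i * mu i.
Proof.
move=> hs; rewrite /Lfun (big_ord_widen M (fun i => q`_i * mu i) hs) big_mkcond /=.
apply: eq_bigr => i _; case: ifP => // h.
by rewrite nth_default ?mul0r // leqNgt h.
Qed.

Lemma Lfun_add q1 q2 : Lfun mu (q1 + q2) = Lfun mu q1 + Lfun mu q2.
Proof.
pose M := maxn (size q1) (size q2).
rewrite !(@Lfun_big _ M) ?leq_maxl ?leq_maxr ?size_polyD // -big_split /=.
by apply: eq_bigr => i _; rewrite coefD mulrDl.
Qed.

Lemma Lfun_scale c q : Lfun mu (c *: q) = c * Lfun mu q.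
Proof.
rewrite !(@Lfun_big _ (size q)) ?size_scale_leq // mulr_sumr.
by apply: eq_bigr => i _; rewrite coefZ mulrA.
Qed.

Lemma Lfun0 : Lfun mu 0 = 0.
Proof. by rewrite /Lfun size_poly0 big_ord0. Qed.

Variable pp : nat -> {poly C}.
Hypothesis hOP : OP_orthonormal mu pp.

Lemma pp_neq0 j : pp j != 0.
Proof. by rewrite -size_poly_eq0 hOP.1. Qed.

Lemma gam_neq0 j : gam pp j != 0.
Proof. by rewrite /gam lead_coef_eq0 pp_neq0. Qed.

Lemma ortho j (s : {poly C}) : (size s <= j)%N -> Lfun mu (s * pp j) = 0.
Proof.
move: s; suff H : forall m (s : {poly C}), (size s <= m)%N -> (m <= j)%N -> Lfun mu (s * pp j) = 0.
  by move=> s hs; apply: (H j).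
elim=> [|m IH] s hs hm.
  by move: hs; rewrite leqn0 size_poly_eq0 => /eqP ->; rewrite mul0r Lfun0.
pose c := s`_m / gam pp m.
pose s' := s - c *: pp m.
have hs' : (size s' <= m)%N.
  apply/leq_sizeP => i hi; rewrite coefB coefZ.
  case: (ltnP m i) => h.
    by rewrite !nth_default ?mulr0 ?subr0 //; [rewrite hOP.1 | apply: leq_trans hs h].
  have -> : i = m by apply/eqP; rewrite eqn_leq h hi.
  have -> : (pp m)`_m = gam pp m by rewrite /gam lead_coefE hOP.1.
  by rewrite /c -mulrA mulVf ?gam_neq0 // mulr1 subrr.
have -> : s = s' + c *: pp m by rewrite /s' subrK.
rewrite mulrDl Lfun_add IH //; last by apply: ltnW.
rewrite -scalerAl Lfun_scale hOP.2.
have -> : (m == j) = false by apply/negbTE; rewrite neq_ltn hm.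
by rewrite mulr0 addr0.
Qed.

Lemma ortho_top j : Lfun mu ('X^j * pp j) = (gam pp j)^-1.
Proof.
pose c := (gam pp j)^-1.
pose s' := 'X^j - c *: pp j.
have hs' : (size s' <= j)%N.
  apply/leq_sizeP => i hi; rewrite coefB coefZ coefXn.
  case: (ltnP j i) => h.
    rewrite nth_default ?mulr0 ?subr0; last by rewrite hOP.1.
    by have -> : (i == j) = false by apply/negbTE; rewrite neq_ltn h orbT.
  have -> : i = j by apply/eqP; rewrite eqn_leq h hi.
  have -> : (pp j)`_j = gam pp j by rewrite /gam lead_coefE hOP.1.
  by rewrite eqxx /c mulVf ?gam_neq0 // subrr.
have -> : 'X^j = s' + c *: pp j by rewrite /s' subrK.
by rewrite mulrDl Lfun_add ortho // -scalerAl Lfun_scale hOP.2 eqxx mulr1 add0r.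
Qed.

Definition gA (A : {poly C}) := ls_mul (fseries mu) (ls_of_poly A).
Definition qA A := polypart (gA A).
Definition eA A := ls_sub (gA A) (ls_of_poly (qA A)).

Lemma eps_eA j : eps mu pp j = eA (pp j). Proof. by []. Qed.

Lemma kap_eA_nonneg A m : (0 <= m)%R -> ls_coef (eA A) m = 0.
Proof.
move=> hm; rewrite /eA kap_sub kap_poly hm /qA /polypart coef_poly.
have -> : ls_coef (gA A) m = ls_coef (gA A) (absz m)%:Z by congr ls_coef; lia.
case: ifPn => h; first by rewrite subrr.
rewrite kap_gt ?subrr //; move: h; move: ((gA A).1) => a; lia.
Qed.

Lemma kap_gA_neg A t : ls_coef (gA A) (- (t.+1)%:Z) = Lfun mu ('X^t * A).
Proof.
rewrite /ls_coef /gA /ls_mul /=.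
rewrite add0n addnS.
rewrite big_ord_recl /= mul0r add0r.
rewrite (@Lfun_big _ (size A + t).+1); last first.
  apply: leq_trans (size_polyMleq _ _) _; rewrite size_polyXn; lia.
apply: eq_bigr => i _; rewrite coefXnM /bump /= add1n mulrC.
case: (ltnP i t) => h.
  by rewrite ifF ?mul0r //; apply/negbTE; move: (ltn_ord i) h; move: (nat_of_ord i) => k; lia.
rewrite ifT; last by move: (ltn_ord i) h; move: (nat_of_ord i) => k; lia.
by congr (A`_ _ * _); move: (ltn_ord i) h; move: (nat_of_ord i) => k; lia.
Qed.

Lemma kap_eA_neg A t : ls_coef (eA A) (- (t.+1)%:Z) = Lfun mu ('X^t * A).
Proof.
have h : ~~ (0 <= - (t.+1)%:Z)%R by lia.
by rewrite /eA kap_sub kap_gA_neg kap_poly (negbTE h) subr0. Qed.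

Lemma kap_eps_zero j m : (- (j%:Z) <= m)%R -> ls_coef (eps mu pp j) m = 0.
Proof.
move=> hm; rewrite eps_eA.
case: (boolP (0 <= m)%R) => h; first by rewrite kap_eA_nonneg.
have -> : m = - (((absz m).-1).+1)%:Z by lia.
rewrite kap_eA_neg ortho // size_polyXn; lia.
Qed.

Lemma kap_eps_top j : ls_coef (eps mu pp j) (- (j.+1)%:Z) = (gam pp j)^-1.
Proof. by rewrite eps_eA kap_eA_neg ortho_top. Qed.

End LSF.

Section Transfer.
Variable C : fieldType.
Implicit Types x y : LS C.
Implicit Types p q a b A B W V U : {poly C}.
Implicit Types N D : nat.

Lemma cPPmul N D1 D2 x y a b : (x.1 <= D1)%N -> (y.1 <= D2)%N ->
  cong N (PP D1 N x) a -> cong N (PP D2 N y) b ->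
  cong N (PP (D1 + D2) N (ls_mul x y)) (a * b).
Proof. by move=> h1 h2 c1 c2; apply: cong_trans (@PP_mul _ D1 D2 N x y h1 h2) (cong_mul c1 c2). Qed.

Lemma cPPadd N D x y a b : cong N (PP D N x) a -> cong N (PP D N y) b ->
  cong N (PP D N (ls_add x y)) (a + b).
Proof. by move=> c1 c2; rewrite PP_add; apply: cong_add. Qed.

Lemma cPPsub N D x y a b : cong N (PP D N x) a -> cong N (PP D N y) b ->
  cong N (PP D N (ls_sub x y)) (a - b).
Proof. by move=> c1 c2; rewrite PP_sub; apply: cong_sub. Qed.

Lemma size_mul_le p q m n : (size p <= m.+1)%N -> (size q <= n.+1)%N ->
  (size (p * q)%R <= (m + n).+1)%N.
Proof. move=> h1 h2; apply: leq_trans (size_polyMleq _ _) _; lia. Qed.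

Lemma size_add_le p q m : (size p <= m)%N -> (size q <= m)%N -> (size (p + q)%R <= m)%N.
Proof. by move=> h1 h2; apply: leq_trans (size_polyD _ _) _; rewrite geq_max h1. Qed.

Lemma size_sub_le p q m : (size p <= m)%N -> (size q <= m)%N -> (size (p - q)%R <= m)%N.
Proof. by move=> h1 h2; apply: size_add_le; rewrite ?size_polyN. Qed.

Lemma size_2_le p : (size (2%:R * p)%R <= size p)%N.
Proof. by apply/leq_sizeP => i hi; rewrite mulr_natl coefMn nth_default ?mul0rn. Qed.

Lemma rv2 D p : rv D (2%:R * p) = 2%:R * rv D p.
Proof. by rewrite !mulr_natl rv_muln. Qed.

Lemma cong_fix N E1 E2 k a b : cong N a b -> E1 = E2 + k * (a - b) -> cong N E1 E2.
Proof.
move=> h ->; apply: cong_trans (cong_add (cong_refl _) (cong_mul (cong_refl _) (cong_sub h (cong_refl _)))) _.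
by rewrite subrr mulr0 addr0; apply: cong_refl.
Qed.

Variable mu : nat -> C.
Local Notation fs := (fseries mu).

Lemma eA_deg A : (eA mu A).1 = maxn (size A) (size (qA mu A)). Proof. by []. Qed.

Lemma PP_eA N D A : (size A <= D)%N -> (size (qA mu A) <= D)%N ->
  cong N (PP D N (eA mu A)) (PP 0 N fs * rv D A - rv D (qA mu A)).
Proof.
move=> h1 h2; apply: cPPsub; last exact: PP_poly.
by apply: (@cPPmul N 0 D) => //; apply: PP_poly.
Qed.

Lemma PP_deA N D A : (size A <= D)%N -> (size (qA mu A) <= D)%N ->
  cong N (PP D N (ls_deriv (eA mu A)))
    (Dl 0 (PP 0 N fs) * rv D A + PP 0 N fs * Dl D (rv D A) - Dl D (rv D (qA mu A))).
Proof.
move=> h1 h2; apply: (cong_trans (@PP_deriv _ D N _ _)).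
  by rewrite eA_deg geq_max h1.
apply: (cong_trans (cong_Dl D (@PP_eA N D A h1 h2))).
rewrite Dl_sub.
have -> : Dl D (PP 0 N fs * rv D A) = Dl 0 (PP 0 N fs) * rv D A + PP 0 N fs * Dl D (rv D A)
  := Dl_mul 0 D _ _.
exact: cong_refl.
Qed.

Lemma PP_polyd N D A : (size A <= D.+1)%N ->
  cong N (PP D N (ls_of_poly A^`())) (Dl D (rv D A)).
Proof. by move=> h; apply: cong_trans (@PP_poly _ D N _) _; rewrite rv_deriv. Qed.

Lemma semi_cong N Dw W V U : semiclassical mu W V U ->
  (size W <= Dw)%N -> (size V <= Dw)%N -> (size U <= Dw)%N ->
  cong N (rv Dw W * Dl 0 (PP 0 N fs)) (2%:R * rv Dw V * PP 0 N fs + rv Dw U).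
Proof.
move=> [_ hsc] hW hV hU.
have e := ls_eq_PP Dw N hsc.
have h0 : ((ls_deriv fs).1 <= 0)%N by [].
have h1 : (fs.1 <= 0)%N by [].
have c1 : cong N (PP Dw N (ls_mul (ls_of_poly W) (ls_deriv fs))) (rv Dw W * Dl 0 (PP 0 N fs)).
  have := cPPmul (N:=N) (D1:=Dw) (D2:=0) (x:=ls_of_poly W) (y:=ls_deriv fs) hW h0 (@PP_poly _ Dw N W) (@PP_deriv _ 0 N _ h1).
  by rewrite addn0.
have c2 : cong N (PP Dw N (ls_mul (ls_of_poly (2%:R * V)) fs)) (2%:R * rv Dw V * PP 0 N fs).
  have := cPPmul (N:=N) (D1:=Dw) (D2:=0) (x:=ls_of_poly (2%:R * V)) (y:=fs) (leq_trans (size_2_le V) hV) h1 (@PP_poly _ Dw N _) (@cong_refl _ N (PP 0 N fs)).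
  by rewrite addn0 rv2.
apply: cong_trans (cong_sym c1) _; rewrite e PP_add.
by apply: cong_add => //; apply: PP_poly.
Qed.

End Transfer.

Ltac szlia :=
  repeat match goal with
  | H : context [size ?p] |- _ => revert H
  end;
  repeat match goal with
  | |- context [size ?p] => let s := fresh "s" in move: (size p) => s
  end; lia.

Section Th.
Variable C : fieldType.
Variable mu : nat -> C.
Local Notation fs := (fseries mu).

Lemma Theta_eq (pp : nat -> {poly C}) (W V U : {poly C}) j : semiclassical mu W V U ->
  Theta mu pp W V j =
  W * ((qA mu (pp j))^`() * pp j - qA mu (pp j) * (pp j)^`()) - U * (pp j) ^+ 2
   - 2%:R * V * qA mu (pp j) * pp j.
Proof.
move=> hs.
set A := pp j; set q := qA mu A.
set Th := W * (q^`() * A - q * A^`()) - U * A ^+ 2 - 2%:R * V * q * A.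
rewrite /Theta; apply: polypart_eq.
pose D := (size A + size q).+1.
pose Dw := (size W + size V + size U + size Th)%N.
have hA' := size_deriv_le A.
have hq' := size_deriv_le q.
have h2V := size_2_le V.
have hdeg : ((Theta_ls mu pp W V j).1 <= Dw + (D + D))%N.
  rewrite /Theta_ls /eps /= -/A.
  change (polypart (ls_mul fs (ls_of_poly A))) with q.
  rewrite /Dw /D !maxnE; szlia.
have hAD : (size A <= D)%N by rewrite /D; szlia.
have hqD : (size q <= D)%N by rewrite /D; szlia.
have hA1 : (size A <= D.+1)%N by szlia.
have hq1 : (size q <= D.+1)%N by szlia.
have hW : (size W <= Dw)%N by rewrite /Dw; szlia.
have hV : (size V <= Dw)%N by rewrite /Dw; szlia.
have hU : (size U <= Dw)%N by rewrite /Dw; szlia.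
have hTh : (size Th <= Dw + (D + D))%N by rewrite /Dw; szlia.
apply: (@PP_ls_eq _ (Dw + (D + D))) => // N.
set F := PP 0 N fs.
have he := PP_eA (mu:=mu) (N:=N) hAD hqD.
have hde := PP_deA (mu:=mu) (N:=N) hAD hqD.
have hAd := PP_polyd (N:=N) hA1.
have hqd := PP_polyd (N:=N) hq1.
have hWp := @PP_poly _ Dw N W.
have h2p := @PP_poly _ Dw N (2%:R * V).
have hAp := @PP_poly _ D N A.
have heD : ((eA mu A).1 <= D)%N by rewrite eA_deg geq_max hAD.
have hX := cPPsub (cPPmul (x:=eA mu A) (y:=ls_of_poly A^`()) heD (leq_trans hA' hAD) he hAd)
                  (cPPmul (x:=ls_deriv (eA mu A)) (y:=ls_of_poly A) heD hAD hde hAp).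
have hY := cPPmul (x:=eA mu A) (y:=ls_of_poly A) heD hAD he hAp.
have hXd : ((ls_sub (ls_mul (eA mu A) (ls_of_poly A^`())) (ls_mul (ls_deriv (eA mu A)) (ls_of_poly A))).1 <= D + D)%N.
  by rewrite /= -/q !maxnE; rewrite /D; szlia.
have hYd : ((ls_mul (eA mu A) (ls_of_poly A)).1 <= D + D)%N.
  by rewrite /= -/q !maxnE; rewrite /D; szlia.
have hT := cPPadd (cPPmul (x:=ls_of_poly W) hW hXd hWp hX)
                  (cPPmul (x:=ls_of_poly (2%:R * V)) (leq_trans h2V hV) hYd h2p hY).
rewrite rv2 in hT.
have hsc := semi_cong (N:=N) hs hW hV hU.
apply: (cong_trans hT).
apply: cong_trans (cong_sym (@PP_poly _ (Dw + (D + D)) N Th)).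
clearbody D Dw.
have hqA : (size (q * A)%R <= (D + D).+1)%N by apply: size_mul_le; szlia.
have hAA : (size (A * A)%R <= (D + D).+1)%N by apply: size_mul_le; szlia.
have hX1 : (size (q^`() * A - q * A^`())%R <= (D + D).+1)%N.
  by apply: size_sub_le; apply: size_mul_le; szlia.
have -> : rv (Dw + (D + D)) Th = rv Dw W * (Dl D (rv D q) * rv D A - rv D q * Dl D (rv D A))
     - rv Dw U * (rv D A * rv D A) - 2%:R * rv Dw V * (rv D q * rv D A).
  have -> : Th = W * (q^`() * A - q * A^`()) - U * (A * A) - (2%:R * V) * (q * A).
    by rewrite /Th expr2 !mulrA.
  rewrite !rv_sub !rv_mul ?rv_sub ?rv_mul ?rv_deriv ?rv2 //; try szlia.
apply: (cong_fix (k := - (rv D A * rv D A)) hsc).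
rewrite /F; ring.
Qed.

Lemma Omega_eq (pp : nat -> {poly C}) (W V U : {poly C}) n : semiclassical mu W V U ->
  let A := pp n in let B := pp n.-1 in let q := qA mu A in let r := qA mu B in
  Omega mu pp W V n =
  (acoef pp n)%:P * (W * (q^`() * B - r * A^`()) - U * (A * B) - V * (r * A + q * B)).
Proof.
move=> hs A B q r.
set a := acoef pp n.
set Om := (a%:P * _)%R.
rewrite /Omega; apply: polypart_eq.
pose D := (size A + size q + size B + size r).+1.
pose Dw := (size W + size V + size U + size Om)%N.
have hA' := size_deriv_le A.
have hq' := size_deriv_le q.
have haW := size_scale_leq a W.
have haV := size_scale_leq a V.
have hdeg : ((Omega_ls mu pp W V n).1 <= Dw + (D + D))%N.
  rewrite /Omega_ls /eps /= -/A -/B.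
  change (polypart (ls_mul fs (ls_of_poly A))) with q.
  change (polypart (ls_mul fs (ls_of_poly B))) with r.
  rewrite /Dw /D !maxnE; szlia.
have hAD : (size A <= D)%N by rewrite /D; szlia.
have hqD : (size q <= D)%N by rewrite /D; szlia.
have hBD : (size B <= D)%N by rewrite /D; szlia.
have hrD : (size r <= D)%N by rewrite /D; szlia.
have hW : (size W <= Dw)%N by rewrite /Dw; szlia.
have hV : (size V <= Dw)%N by rewrite /Dw; szlia.
have hU : (size U <= Dw)%N by rewrite /Dw; szlia.
have hOm : (size Om <= Dw + (D + D))%N by rewrite /Dw; szlia.
apply: (@PP_ls_eq _ (Dw + (D + D))) => // N.
set F := PP 0 N fs.
have he := PP_eA (mu:=mu) (N:=N) hAD hqD.
have he1 := PP_eA (mu:=mu) (N:=N) hBD hrD.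
have hde := PP_deA (mu:=mu) (N:=N) hAD hqD.
have hAd := PP_polyd (N:=N) (leq_trans hAD (leqnSn _)).
have hWp := @PP_poly _ Dw N (a *: W).
have hVp := @PP_poly _ Dw N (a *: V).
have hAp := @PP_poly _ D N A.
have hBp := @PP_poly _ D N B.
have heD : ((eA mu A).1 <= D)%N by rewrite eA_deg geq_max hAD.
have heD1 : ((eA mu B).1 <= D)%N by rewrite eA_deg geq_max hBD.
have hX := cPPsub (cPPmul (x:=eA mu B) (y:=ls_of_poly A^`()) heD1 (leq_trans hA' hAD) he1 hAd)
                  (cPPmul (x:=ls_deriv (eA mu A)) (y:=ls_of_poly B) heD hBD hde hBp).
have hY := cPPadd (cPPmul (x:=eA mu B) (y:=ls_of_poly A) heD1 hAD he1 hAp)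
                  (cPPmul (x:=eA mu A) (y:=ls_of_poly B) heD hBD he hBp).
have hXd : ((ls_sub (ls_mul (eA mu B) (ls_of_poly A^`())) (ls_mul (ls_deriv (eA mu A)) (ls_of_poly B))).1 <= D + D)%N.
  by rewrite /= -/q -/r !maxnE; rewrite /D; szlia.
have hYd : ((ls_add (ls_mul (eA mu B) (ls_of_poly A)) (ls_mul (eA mu A) (ls_of_poly B))).1 <= D + D)%N.
  by rewrite /= -/q -/r !maxnE; rewrite /D; szlia.
have hT := cPPadd (cPPmul (x:=ls_of_poly (a *: W)) (leq_trans haW hW) hXd hWp hX)
                  (cPPmul (x:=ls_of_poly (a *: V)) (leq_trans haV hV) hYd hVp hY).
have hsc := semi_cong (N:=N) hs hW hV hU.
apply: (cong_trans hT).
rewrite !rv_scale -!mul_polyC.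
apply: cong_trans (cong_sym (@PP_poly _ (Dw + (D + D)) N Om)).
clearbody D Dw.
have hAB : (size (A * B)%R <= (D + D).+1)%N by apply: size_mul_le; szlia.
have hX1 : (size (q^`() * B - r * A^`())%R <= (D + D).+1)%N.
  by apply: size_sub_le; apply: size_mul_le; szlia.
have hX2 : (size (r * A + q * B)%R <= (D + D).+1)%N.
  by apply: size_add_le; apply: size_mul_le; szlia.
have -> : rv (Dw + (D + D)) Om = a%:P * (rv Dw W * (Dl D (rv D q) * rv D B - rv D r * Dl D (rv D A))
     - rv Dw U * (rv D A * rv D B) - rv Dw V * (rv D r * rv D A + rv D q * rv D B)).
  rewrite /Om mul_polyC rv_scale -mul_polyC.
  rewrite !rv_sub !rv_mul ?rv_sub ?rv_add ?rv_mul ?rv_deriv //; szlia.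
apply: (cong_fix (k := - (a%:P * rv D A * rv D B)) hsc).
rewrite /F; ring.
Qed.

End Th.

Section Cas.
Variable C : fieldType.
Variable mu : nat -> C.
Variable pp : nat -> {poly C}.
Hypothesis hOP : OP_orthonormal mu pp.
Local Notation fs := (fseries mu).

Lemma coefA_zero j (m : int) : ((j%:Z) < m)%R -> ls_coef (ls_of_poly (pp j)) m = 0.
Proof.
move=> h; rewrite kap_poly; case: ifP => // h0.
rewrite nth_default // hOP.1; lia.
Qed.

Lemma kap_mul_split (x y : LS C) D (i : nat) : (x.1 <= D)%N -> (y.1 <= D)%N -> (i <= D + D)%N ->
  ls_coef (ls_mul x y) i%:Z =
  \sum_(l < (D + D - i).+1) ls_coef x (D%:Z - l%:Z) * ls_coef y (D%:Z - (D + D - i - l)%N%:Z).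
Proof.
move=> hx hy hi.
have -> : (i%:Z = (D + D)%N%:Z - (D + D - i)%N%:Z)%R by lia.
by rewrite -/(al _ _ _) al_mul.
Qed.

Lemma casorati n : (1 <= n)%N ->
  (acoef pp n)%:P * (qA mu (pp n) * pp n.-1 - qA mu (pp n.-1) * pp n) = 1.
Proof.
move=> hn.
set A := pp n; set B := pp n.-1; set q := qA mu A; set r := qA mu B.
set P := q * B - r * A.
pose D := (size A + size q + size B + size r + size P).+1.
have hAD : (size A <= D)%N by rewrite /D; szlia.
have hqD : (size q <= D)%N by rewrite /D; szlia.
have hBD : (size B <= D)%N by rewrite /D; szlia.
have hrD : (size r <= D)%N by rewrite /D; szlia.
have hPD : (size P <= D + D)%N by rewrite /D; szlia.
have heD : ((eA mu A).1 <= D)%N by rewrite eA_deg geq_max hAD.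
have heD1 : ((eA mu B).1 <= D)%N by rewrite eA_deg geq_max hBD.
have hls : ls_eq (ls_of_poly P)
   (ls_sub (ls_mul (eA mu B) (ls_of_poly A)) (ls_mul (eA mu A) (ls_of_poly B))).
  apply: (@PP_ls_eq _ (D + D)) => //.
    by rewrite /= !maxnE -/q -/r; szlia.
  move=> N.
  apply: cong_trans (@PP_poly _ (D + D) N P) _.
  have he := PP_eA (mu:=mu) (N:=N) hAD hqD.
  have he1 := PP_eA (mu:=mu) (N:=N) hBD hrD.
  have hR := cPPsub (cPPmul (x:=eA mu B) (y:=ls_of_poly A) heD1 hAD he1 (@PP_poly _ D N A))
                    (cPPmul (x:=eA mu A) (y:=ls_of_poly B) heD hBD he (@PP_poly _ D N B)).
  apply: cong_trans (cong_sym hR).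
  rewrite /P rv_sub !rv_mul; try szlia.
  by apply: cong_eq; ring.
have EA : eA mu A = eps mu pp n by [].
have EB : eA mu B = eps mu pp n.-1 by [].
have hsA : size A = n.+1 by rewrite hOP.1.
have hsB : size B = n by rewrite hOP.1 prednK.
have hnD : (n.+1 <= D)%N by rewrite -hsA.
have hP : P = (gam pp n / gam pp n.-1)%:P.
  apply/polyP => i; rewrite coefC.
  have hi0 := hls i%:Z.
  have h0 : (0 <= i%:Z)%R by [].
  rewrite kap_poly h0 kap_sub /= in hi0; rewrite hi0; clear h0 hi0.
  case: (leqP i (D + D)) => hi; last first.
    rewrite !kap_gt ?subr0; (try by case: i hi);
      by apply: leq_trans hi; rewrite ltnS; apply: leq_add.
  rewrite !(kap_mul_split (D:=D)) //.
  rewrite EA EB.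
  have z2 : \sum_(l < (D + D - i).+1) ls_coef (eps mu pp n) (D%:Z - l%:Z) *
      ls_coef (ls_of_poly B) (D%:Z - (D + D - i - l)%N%:Z) = 0.
    apply: big1 => l _.
    case: (ltnP (D + n) l) => hl.
      rewrite (@coefA_zero n.-1) ?mulr0 //; move: (ltn_ord l) hl; move: (nat_of_ord l) => u; lia.
    by rewrite kap_eps_zero ?mul0r //; move: hl; move: (nat_of_ord l) => u; lia.
  rewrite z2 subr0; clear z2.
  case: i hi => [|i] hi; last first.
    apply: big1 => l _.
    case: (ltnP (D + n) l.+1) => hl.
      rewrite (@coefA_zero n) ?mulr0 //; move: (ltn_ord l) hl; move: (nat_of_ord l) => u; lia.
    rewrite kap_eps_zero ?mul0r //; move: hl hn; move: (nat_of_ord l) => u; lia.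
  have hl0 : (D + n < (D + D - 0).+1)%N by lia.
  rewrite (bigD1 (Ordinal hl0)) //= big1 ?addr0; last first.
    move=> l /eqP hne.
    have hne' : nat_of_ord l != (D + n)%N by apply/eqP => h; apply: hne; apply: val_inj.
    case: (ltnP (D + n) l) => hl.
      rewrite (@coefA_zero n) ?mulr0 //; move: (ltn_ord l) hl; move: (nat_of_ord l) => u; lia.
    rewrite kap_eps_zero ?mul0r //; move: hl hn hne'; move: (nat_of_ord l) => u /eqP; lia.
  have -> : (D%:Z - (D + n)%N%:Z = - ((n.-1).+1)%:Z)%R by lia.
  rewrite kap_eps_top // kap_poly.
  have -> : (D%:Z - (D + D - 0 - (D + n))%N%:Z = n%:Z)%R by lia.
  have h0 : (0 <= n%:Z)%R by [].
  have -> : A`_n = gam pp n by rewrite /gam lead_coefE -/A hsA.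
  by rewrite h0 mulrC.
rewrite hP /acoef -polyCM.
have g1 := gam_neq0 hOP n; have g2 := gam_neq0 hOP n.-1.
by rewrite mulrA divfK // divff // polyC1.
Qed.
End Cas.

Unset Implicit Arguments.
Local Open Scope complex_scope.

Theorem mainTheorem4 (R : realType) (mu : nat -> R[i]) (p : nat -> {poly R[i]})
    (W V U : {poly R[i]}) :
  (forall n : nat, \det (hankel mu n) != 0) ->
  OP_orthonormal mu p ->
  semiclassical mu W V U ->
  forall n : nat, (1 <= n)%N ->
  let Th := Theta mu p W V n in
  let Th1 := Theta mu p W V n.-1 in
  let Om := Omega mu p W V n in
  let an := acoef p n in
  let y := p n in
  exists K : {poly R[i]},
    W * K = W * ((Om - V)^`() * Th - (Om - V) * Th^`())
            + Th * (Om ^+ 2 - V ^+ 2 - (an ^+ 2) *: (Th * Th1)) /\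
    W * Th * y^`(2) = (W * Th^`() - W^`() * Th - 2%:R * V * Th) * y^`() + K * y.
Proof.
move=> _ hOP hsc n hn Th Th1 Om an y.
have eTh := Theta_eq p n hsc.
have eTh1 := Theta_eq p n.-1 hsc.
have eOm := Omega_eq p n hsc.
rewrite /Th /Th1 /Om /an /y eTh eTh1 eOm.
exact: (final_alg V U hsc.1 (casorati hOP hn)).
Qed.
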